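(* Let $n\ge1$, $V=(\mathbb F_2)^n$, let $\rho\in\mathrm{Sym}(V)$ with $0\rho=0$, and let $\bar\rho$ be the corresponding Feistel operator. For $i=1,2$ let $A_i, D_i$ be subgroups of $V$ and let $\varphi_i:A_i\to V$ be a group homomorphism, and set \[ \mathcal U_i=\{(a,\ a\varphi_i+d)\mid a\in A_i,\ d\in D_i\}\le V\times V. \] Suppose $\mathcal U_1\bar\rho=\mathcal U_2$. Then: \begin{enumerate} \item $\mathrm{Ker}\,\varphi_1\le D_2$; \item $D_2\le A_1$; \item $A_2=A_1\varphi_1+D_1$; \item $D_2\varphi_1\le D_1$. \end{enumerate} Moreover, \begin{itemize} \item[(i)] if $D_1=\{0\}$ and $D_2=\{0\}$, then $\rho$ is linear on $A_2$, i.e. $(x+y)\rho=x\rho+y\rho$ for all $x,y\in A_2$; \item[(ii)] if $\mathcal U_1=A_1\times D_1$ and $\mathcal U_2=A_2\times D_2$, then $D_1=A_2$ and $D_2=A_1$. \end{itemize}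
   Context: Maps act on the right; $+$ is bitwise XOR. For $\rho\in\mathrm{Sym}(V)$, the Feistel operator induced by $\rho$ is $\bar\rho:V\times V\to V\times V$, $(x_1,x_2)\bar\rho=(x_2,\ x_1+x_2\rho)$. For a set $S$ and a map $f$, $Sf=\{sf\mid s\in S\}$. *)

(* Defs.v *)
From HB Require Import structures.
From mathcomp Require Import all_boot all_order all_algebra all_fingroup.
Set Implicit Arguments. Unset Strict Implicit. Unset Printing Implicit Defensive.
Import GRing.Theory.
Local Open Scope ring_scope.

Notation Vn n := 'rV['F_2]_n.

Definition addsubgroup (n : nat) (A : {set Vn n}) : Prop :=
  0 \in A /\ (forall x y, x \in A -> y \in A -> x - y \in A).

(* phi : A -> V is a group homomorphism (phi is given as a total function on V;
   only its values on A matter). *)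
Definition hom_on (n : nat) (A : {set Vn n}) (phi : Vn n -> Vn n) : Prop :=
  forall x y, x \in A -> y \in A -> phi (x + y) = phi x + phi y.

Definition kerA (n : nat) (A : {set Vn n}) (phi : Vn n -> Vn n) : {set Vn n} :=
  [set a in A | phi a == 0].

Definition setsum (n : nat) (S T : {set Vn n}) : {set Vn n} :=
  [set s + t | s in S, t in T].

Definition Uset (n : nat) (A D : {set Vn n}) (phi : Vn n -> Vn n)
  : {set Vn n * Vn n} :=
  [set (a, phi a + d) | a in A, d in D].

Definition feistel (n : nat) (rho : {perm Vn n}) (x : Vn n * Vn n) : Vn n * Vn n :=
  (x.2, x.1 + rho x.2).

(* Main.v *)
Require Import Defs.
From HB Require Import structures.
From mathcomp Require Import all_boot all_order all_algebra all_fingroup.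
Import GRing.Theory.
Set Implicit Arguments. Unset Strict Implicit.
Local Open Scope ring_scope.

Lemma c2 n (x : Vn n) : x + x = 0.
Proof. apply/rowP => i; rewrite !mxE. case: (x 0 i) => [[|[|m]] Hm]; apply/val_inj => //. Qed.

Lemma solve2 n (u w d : Vn n) : u = w + d -> d = u + w.
Proof. by move=> ->; rewrite addrAC c2 add0r. Qed.

Lemma addsub_add n (A : {set Vn n}) x y : addsubgroup A -> x \in A -> y \in A -> x + y \in A.
Proof.
move=> [H0 Hs] hx hy.
rewrite -[y]opprK; apply: (Hs) => //; rewrite -sub0r; exact: Hs.
Qed.

Lemma UsetP n (A D : {set Vn n}) phi u v :
  reflect (exists2 a, a \in A & exists2 d, d \in D & (u, v) = (a, phi a + d))
          ((u, v) \in Uset A D phi).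
Proof.
apply: (iffP imset2P).
  by case=> a d ha hd e; exists a => //; exists d.
by case=> a ha [d hd e]; exact: (Imset2spec ha hd e).
Qed.

Lemma mem_U n (A D : {set Vn n}) phi a d : a \in A -> d \in D -> (a, phi a + d) \in Uset A D phi.
Proof. by move=> ha hd; apply/UsetP; exists a => //; exists d. Qed.

Theorem lemma4p6 (n : nat) (hn : (1 <= n)%N) (rho : {perm Vn n}) (hrho0 : rho 0 = 0)
  (A1 D1 A2 D2 : {set Vn n}) (phi1 phi2 : Vn n -> Vn n)
  (hA1 : addsubgroup A1) (hD1 : addsubgroup D1)
  (hA2 : addsubgroup A2) (hD2 : addsubgroup D2)
  (hphi1 : hom_on A1 phi1) (hphi2 : hom_on A2 phi2)
  (hU : feistel rho @: Uset A1 D1 phi1 = Uset A2 D2 phi2) :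
  (kerA A1 phi1 \subset D2 /\
      D2 \subset A1 /\
      A2 = setsum (phi1 @: A1) D1 /\
      phi1 @: D2 \subset D1 /\
      (D1 = [set 0] -> D2 = [set 0] ->
         forall x y, x \in A2 -> y \in A2 -> rho (x + y) = rho x + rho y) /\
    (Uset A1 D1 phi1 = setX A1 D1 -> Uset A2 D2 phi2 = setX A2 D2 ->
         D1 = A2 /\ D2 = A1)).
Proof.
have fw : forall a d, a \in A1 -> d \in D1 ->
    exists2 e, e \in D2 & (phi1 a + d \in A2 /\ a + rho (phi1 a + d) = phi2 (phi1 a + d) + e).
  move=> a d ha hd.
  have : feistel rho (a, phi1 a + d) \in Uset A2 D2 phi2 by rewrite -hU; apply: imset_f; apply: mem_U.
  rewrite /feistel /=; case/UsetP=> b hb [e he [eb ee]].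
  exists e => //; rewrite -eb in hb ee; by split.
have bw : forall b e, b \in A2 -> e \in D2 ->
    exists2 a, a \in A1 & exists2 d, d \in D1 & (b = phi1 a + d /\ phi2 b + e = a + rho b).
  move=> b e hb he.
  have : (b, phi2 b + e) \in feistel rho @: Uset A1 D1 phi1 by rewrite hU; apply: mem_U.
  case/imsetP=> [[u v]] /UsetP [a ha [d hd [-> ->]]] [eb ee].
  exists a => //; exists d => //; split => //; by rewrite ee eb.
have p20 : phi2 0 = 0.
  have := hphi2 0 0 (proj1 hA2) (proj1 hA2); rewrite addr0 => h.
  by have := solve2 h; rewrite c2.
have p10 : phi1 0 = 0.
  have := hphi1 0 0 (proj1 hA1) (proj1 hA1); rewrite addr0 => h.
  by have := solve2 h; rewrite c2.
have D2A1 : forall e, e \in D2 -> e \in A1 /\ phi1 e \in D1.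
  move=> e he; have [a ha [d hd [e1 e2]]] := bw 0 e (proj1 hA2) he.
  move: e2; rewrite p20 add0r hrho0 addr0 => ->; split => //.
  have := solve2 e1; rewrite add0r => <-; exact: hd.
split.
  apply/subsetP => a; rewrite inE => /andP [ha /eqP ha0].
  have [e he [_ ]] := fw a 0 ha (proj1 hD1).
  by rewrite ha0 addr0 hrho0 addr0 p20 add0r => ->.
split; first by apply/subsetP => e /D2A1 [].
split.
  apply/setP => b; apply/idP/idP.
    move=> hb; have [a ha [d hd [-> _]]] := bw b 0 hb (proj1 hD2).
    by apply/imset2P; apply: (Imset2spec _ hd) => //; apply: imset_f.
  case/imset2P => c d /imsetP [a ha ->] hd ->.
  by have [e _ []] := fw a d ha hd.
split.
  by apply/subsetP => y /imsetP [e he ->]; case: (D2A1 e he).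
split.
  move=> E1 E2.
  have key : forall a, a \in A1 -> phi1 a \in A2 /\ rho (phi1 a) = phi2 (phi1 a) + a.
    move=> a ha; have [e he [hb ee]] := fw a 0 ha (proj1 hD1).
    move: he ee; rewrite E2 inE => /eqP -> ; rewrite !addr0 => ee.
    by split; [rewrite addr0 in hb | exact: solve2 (esym ee)].
  have rep : forall x, x \in A2 -> exists2 a, a \in A1 & x = phi1 a.
    move=> x hx; have [a ha [d hd [ex _]]] := bw x 0 hx (proj1 hD2).
    by move: hd ex; rewrite E1 inE => /eqP ->; rewrite addr0 => ->; exists a.
  move=> x y hx hy.
  have [a ha ->] := rep x hx; have [b hb ->] := rep y hy.
  have hab : a + b \in A1 by apply: addsub_add.
  rewrite -hphi1 //. 
  have [_ ->] := key _ hab; have [hxa ->] := key _ ha; have [hyb ->] := key _ hb.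
  rewrite hphi1 // hphi2 //.
  by rewrite -!addrA (addrCA (phi2 (phi1 b))).
move=> E1 E2; split.
  apply/setP => x; apply/idP/idP.
    move=> hx; have [e he [hb _]] := fw 0 x (proj1 hA1) hx.
    have : (phi1 0 + x, phi2 (phi1 0 + x) + e) \in setX A2 D2 by rewrite -E2; apply: mem_U.
    by rewrite p10 add0r inE /= => /andP [].
  move=> hx; have [a ha [d hd [ex ee]]] := bw x 0 hx (proj1 hD2).
  have : (a, phi1 a + d) \in setX A1 D1 by rewrite -E1; apply: mem_U.
  by rewrite inE /= -ex => /andP [].
apply/setP => x; apply/idP/idP; first by case/D2A1.
move=> hx.
have : (x, 0) \in Uset A1 D1 phi1 by rewrite E1 inE /= hx (proj1 hD1).
case/UsetP=> a ha [d hd [ea eb]].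
have [e he [hb ee]] := fw a d ha hd.
have : (phi1 a + d, phi2 (phi1 a + d) + e) \in setX A2 D2 by rewrite -E2; apply: mem_U.
rewrite inE /= => /andP [_].
by rewrite -ee -eb hrho0 addr0 ea.
Qed.
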